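(* Consider the control system $\dot x=f(d,x)+g(x)u$, $x\in\mathbb{R}^n$, $u\in U\subseteq\mathbb{R}$, $d\in D$, with $D\subseteq\mathbb{R}^l$ compact, $f,g$ continuous, $f(d,0)=0$ for all $d\in D$, satisfying (H) and one of (P1), (P2), (P3). Suppose that $V_1,\dots,V_k\in C^1(\mathbb{R}^n;\mathbb{R}_+)$ is a VRCLF for this system, with associated data $\eta,W,\delta,K,\gamma_{i,j},\rho,\varepsilon$ (and $A,\kappa,\nu$ in property (vi)). Then there exist functions $\tilde\gamma_{i,j}\in\mathcal{N}_1$, $i,j=1,\dots,k$, with $\tilde\gamma_{i,i}\equiv0$, such that for $i\ne j$ each $\tilde\gamma_{i,j}$ is positive definite and satisfies $\lim_{s\to+\infty}\tilde\gamma_{i,j}(s)=+\infty$, and such that all properties of the definition of the VRCLF (for the same case (P1), (P2) or (P3)) hold with $\tilde\gamma_{i,j}$ in place of $\gamma_{i,j}$ (and the same remaining data).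
   Context: Notation: $\mathbb{R}_+=[0,+\infty)$. A function $\gamma:\mathbb{R}_+\to\mathbb{R}_+$ is of class $\mathcal{N}_1$ if it is continuous, non-decreasing and $\gamma(0)=0$; of class $\mathcal{K}_\infty$ if it is continuous, increasing, $\gamma(0)=0$ and $\gamma(s)\to+\infty$ as $s\to+\infty$. A function $\rho:\mathbb{R}_+\to\mathbb{R}_+$ is positive definite if $\rho(0)=0$ and $\rho(s)>0$ for $s>0$. A continuous $W:\mathbb{R}^n\to\mathbb{R}$ is radially unbounded if for every $M>0$ the set $\{x: W(x)\le M\}$ is compact or empty. For a $C^1$ function $V:\mathbb{R}^n\to\mathbb{R}$, $\nabla V(x)$ denotes its (row) gradient, $L_gV(x):=\nabla V(x)g(x)$ and $\max_{d\in D}L_fV(x):=\max_{d\in D}\nabla V(x)f(d,x)$. Hypothesis (H): there exists a symmetric positive definite matrix $P\in\mathbb{R}^{n\times n}$ such that for every bounded $S\subset\mathbb{R}^n\times\mathbb{R}$ there is $L\ge0$ with $(x-y)'P\big(f(d,x)+g(x)u-f(d,y)-g(y)u\big)\le L|x-y|^2$ for all $(x,u),(y,u)\in S$ and all $d\in D$. Control sets: (P1) $U=\mathbb{R}$; (P2) $U=[-a,+\infty)$ for some constant $a\ge0$; (P3) $U=[-a,b]$ for some constants $a,b\ge0$. Small-gain conditions for functions $\gamma_{i,j}$, $i,j=1,\dots,k$: for each $r=2,\dots,k$ and all pairwise distinct $i_1,\dots,i_r\in\{1,\dots,k\}$, $(\gamma_{i_1,i_2}\circ\gamma_{i_2,i_3}\circ\cdots\circ\gamma_{i_r,i_1})(s)<s$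 for all $s>0$. Definition (VRCLF). Under (H),(P1), a family $V_1,\dots,V_k\in C^1(\mathbb{R}^n;\mathbb{R}_+)$ is a VRCLF if there exist $\eta\in C^1(\mathbb{R}^n;\mathbb{R})$ with $\eta(0)<0$, a radially unbounded $W\in C^1(\mathbb{R}^n;[1,+\infty))$, $\delta\in C^0(\mathbb{R}_+;(0,+\infty))$, a non-decreasing $K\in C^0(\mathbb{R}_+;[1,+\infty))$, functions $\gamma_{i,j}\in\mathcal{N}_1$ ($i,j=1,\dots,k$) with $\gamma_{i,i}\equiv0$, a continuous positive definite $\rho:\mathbb{R}_+\to\mathbb{R}_+$ and a constant $\varepsilon>0$ such that: (i) there exist $a_1,a_2\in\mathcal{K}_\infty$ with $a_1(|x|)\le\max_{i}V_i(x)\le a_2(|x|)$ for all $x\in\mathbb{R}^n$; (ii) for all $x$ with $\eta(x)\le\varepsilon$ and all $i,j$: if $\max_{s}\gamma_{i,s}(V_s(x))\le V_i(x)$ and $L_gV_i(x)=0$, then $\max_{d\in D}L_fV_i(x)+\rho(V_i(x))\le0$; if $\max_s\gamma_{i,s}(V_s(x))\le V_i(x)$, $\max_s\gamma_{j,s}(V_s(x))\le V_j(x)$ and $L_gV_i(x)L_gV_j(x)<0$, then $\max_{d}L_fV_i(x)+\rho(V_i(x))\le\frac{L_gV_i(x)}{L_gV_j(x)}\big(\max_dL_fV_j(x)+\rho(V_j(x))\big)$; (iii) for all $x$ with $\eta(x)\ge0$: if $L_g\eta(x)=0$ then $\max_dL_f\eta(x)+\delta(\eta(x))\le0$; if $L_gW(x)=0$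 then $\max_dL_fW(x)-K(\eta(x))W(x)\le0$; if $L_g\eta(x)L_gW(x)<0$ then $\max_dL_f\eta(x)+\delta(\eta(x))\le\frac{L_g\eta(x)}{L_gW(x)}\big(\max_dL_fW(x)-K(\eta(x))W(x)\big)$; (iv) for all $x$ with $0\le\eta(x)\le\varepsilon$ and all $j$: if $\max_s\gamma_{j,s}(V_s(x))\le V_j(x)$ and $L_g\eta(x)L_gV_j(x)<0$ then $\max_dL_f\eta(x)+\delta(\eta(x))\le\frac{L_g\eta(x)}{L_gV_j(x)}\big(\max_dL_fV_j(x)+\rho(V_j(x))\big)$; if $\max_s\gamma_{j,s}(V_s(x))\le V_j(x)$ and $L_gW(x)L_gV_j(x)<0$ then $\max_dL_fW(x)-K(\eta(x))W(x)\le\frac{L_gW(x)}{L_gV_j(x)}\big(\max_dL_fV_j(x)+\rho(V_j(x))\big)$; (v) the functions $\gamma_{i,j}$ satisfy the small-gain conditions; (vi) there exist an open set $A\subseteq\mathbb{R}^n$ with $0\in A$ and a locally Lipschitz $\kappa\in C^{\nu}(A;U)$, $\nu\in\{0,1,2,\dots\}\cup\{\infty\}$, with $\kappa(0)=0$, such that for all $i$ and all $x\in A$ with $\max_j\gamma_{i,j}(V_j(x))\le V_i(x)$: $\max_dL_fV_i(x)+L_gV_i(x)\kappa(x)\le-\rho(V_i(x))$. Under (H),(P2) a VRCLF must satisfy (i)–(vi) and also (vii): for all $x$ and $i$: if $\max_s\gamma_{i,s}(V_s(x))\le V_i(x)$, $\eta(x)\le\varepsilon$ and $L_gV_i(x)>0$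 then $\max_dL_fV_i(x)+\rho(V_i(x))-aL_gV_i(x)<0$; if $\eta(x)\ge0$ and $L_g\eta(x)>0$ then $\max_dL_f\eta(x)+\delta(\eta(x))-aL_g\eta(x)<0$; if $\eta(x)\ge0$ and $L_gW(x)>0$ then $\max_dL_fW(x)-K(\eta(x))W(x)-aL_gW(x)<0$. Under (H),(P3) a VRCLF must satisfy (i)–(vii) and also (viii): for all $x$ and $i$: if $\max_s\gamma_{i,s}(V_s(x))\le V_i(x)$, $\eta(x)\le\varepsilon$ and $L_gV_i(x)<0$ then $\max_dL_fV_i(x)+\rho(V_i(x))+bL_gV_i(x)<0$; if $\eta(x)\ge0$ and $L_g\eta(x)<0$ then $\max_dL_f\eta(x)+\delta(\eta(x))+bL_g\eta(x)<0$; if $\eta(x)\ge0$ and $L_gW(x)<0$ then $\max_dL_fW(x)-K(\eta(x))W(x)+bL_gW(x)<0$. *)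

(* Defs.v *)
From Stdlib Require Import Reals List ClassicalEpsilon.
From Stdlib Require Vectors.Fin.
Open Scope R_scope.

Definition Rn (n : nat) := Fin.t n -> R.

Fixpoint fsum (n : nat) : (Fin.t n -> R) -> R :=
  match n return (Fin.t n -> R) -> R with
  | O => fun _ => 0
  | S m => fun v => v Fin.F1 + fsum m (fun i => v (Fin.FS i))
  end.

(* maximum over a finite index set; the empty max is 0 (only used on
   nonnegative quantities, where this agrees with the usual max for k >= 1) *)
Fixpoint fmax (n : nat) : (Fin.t n -> R) -> R :=
  match n return (Fin.t n -> R) -> R with
  | O => fun _ => 0
  | S m => fun v => Rmax (v Fin.F1) (fmax m (fun i => v (Fin.FS i)))
  end.

Definition vzero {n} : Rn n := fun _ => 0.
Definition vsub {n} (x y : Rn n) : Rn n := fun i => x i - y i.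
Definition dot {n} (x y : Rn n) : R := fsum n (fun i => x i * y i).
Definition norm {n} (x : Rn n) : R := sqrt (dot x x).

Definition qform {n} (P : Fin.t n -> Fin.t n -> R) (x y : Rn n) : R :=
  fsum n (fun i => x i * fsum n (fun j => P i j * y j)).

Definition bounded_set {n} (S : Rn n -> Prop) : Prop :=
  exists M, forall x, S x -> norm x <= M.
Definition closed_set {n} (S : Rn n -> Prop) : Prop :=
  forall x, (forall e, 0 < e -> exists y, S y /\ norm (vsub y x) < e) -> S x.
(* Heine-Borel *)
Definition compact_set {n} (S : Rn n -> Prop) : Prop :=
  closed_set S /\ bounded_set S.
Definition open_set {n} (A : Rn n -> Prop) : Prop :=
  forall x, A x -> exists r, 0 < r /\ forall y, norm (vsub y x) < r -> A y.

Definition cont_on {n} (A : Rn n -> Prop) (h : Rn n -> R) : Prop :=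
  forall x, A x -> forall e, 0 < e -> exists dl, 0 < dl /\
    forall y, A y -> norm (vsub y x) < dl -> Rabs (h y - h x) < e.
Definition vcont {n m} (F : Rn n -> Rn m) : Prop :=
  forall x e, 0 < e -> exists dl, 0 < dl /\
    forall y, norm (vsub y x) < dl -> norm (vsub (F y) (F x)) < e.

Definition grad_at {n} (h : Rn n -> R) (v : Rn n) (x : Rn n) : Prop :=
  forall e, 0 < e -> exists dl, 0 < dl /\ forall y, norm (vsub y x) < dl ->
    Rabs (h y - h x - dot v (vsub y x)) <= e * norm (vsub y x).

Definition C1 {n} (h : Rn n -> R) (Dh : Rn n -> Rn n) : Prop :=
  (forall x, grad_at h (Dh x) x) /\ vcont Dh.

Fixpoint Ck_on {n} (m : nat) (A : Rn n -> Prop) (h : Rn n -> R) : Prop :=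
  match m with
  | O => cont_on A h
  | S m' => exists Dh : Rn n -> Rn n,
      (forall x, A x -> grad_at h (Dh x) x) /\
      forall i, Ck_on m' A (fun x => Dh x i)
  end.
Definition Cnu_on {n} (nu : option nat) (A : Rn n -> Prop) (h : Rn n -> R) : Prop :=
  match nu with
  | Some m => Ck_on m A h
  | None => forall m, Ck_on m A h
  end.

Definition loc_lipschitz_on {n} (A : Rn n -> Prop) (h : Rn n -> R) : Prop :=
  forall x, A x -> exists r L, 0 < r /\ 0 <= L /\
    forall y z, A y -> A z -> norm (vsub y x) < r -> norm (vsub z x) < r ->
      Rabs (h y - h z) <= L * norm (vsub y z).

(** * Scalar function classes on R_+ (functions R -> R, only [0,+oo) matters) *)
Definition cont_Rplus (h : R -> R) : Prop :=
  forall s, 0 <= s -> forall e, 0 < e -> exists dl, 0 < dl /\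
    forall t, 0 <= t -> Rabs (t - s) < dl -> Rabs (h t - h s) < e.
Definition tends_infty (h : R -> R) : Prop :=
  forall M, exists s0, forall s, s0 <= s -> M <= h s.

Definition class_N1 (h : R -> R) : Prop :=
  (forall s, 0 <= s -> 0 <= h s) /\ cont_Rplus h /\
  (forall s t, 0 <= s -> s <= t -> h s <= h t) /\ h 0 = 0.
Definition class_Kinf (h : R -> R) : Prop :=
  (forall s, 0 <= s -> 0 <= h s) /\ cont_Rplus h /\
  (forall s t, 0 <= s -> s < t -> h s < h t) /\ h 0 = 0 /\ tends_infty h.
Definition posdef_fun (h : R -> R) : Prop :=
  h 0 = 0 /\ forall s, 0 < s -> 0 < h s.

Definition is_max {l} (D : Rn l -> Prop) (h : Rn l -> R) (m : R) : Prop :=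
  (exists d, D d /\ h d = m) /\ forall d, D d -> h d <= m.

Definition maxD {l} (D : Rn l -> Prop) (h : Rn l -> R) : R :=
  match excluded_middle_informative (exists m, is_max D h m) with
  | left e => proj1_sig (constructive_indefinite_description _ e)
  | right _ => 0
  end.

Definition f_cont {l n} (D : Rn l -> Prop) (f : Rn l -> Rn n -> Rn n) : Prop :=
  forall d x, D d -> forall e, 0 < e -> exists dl, 0 < dl /\
    forall d' x', D d' -> norm (vsub d' d) < dl -> norm (vsub x' x) < dl ->
      norm (vsub (f d' x') (f d x)) < e.

Definition hypH {l n} (D : Rn l -> Prop) (f : Rn l -> Rn n -> Rn n)
    (g : Rn n -> Rn n) : Prop :=
  exists P : Fin.t n -> Fin.t n -> R,
    (forall i j, P i j = P j i) /\
    (forall x, x <> vzero -> 0 < qform P x x) /\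
    forall S : Rn n -> R -> Prop,
      (exists M, forall x u, S x u -> norm x + Rabs u <= M) ->
      exists L, 0 <= L /\
        forall x y u d, S x u -> S y u -> D d ->
          qform P (vsub x y)
            (fun q => f d x q + g x q * u - f d y q - g y q * u)
          <= L * (norm (vsub x y)) ^ 2.

Inductive ctrl_case : Type :=
| CaseP1
| CaseP2 (a : R)
| CaseP3 (a b : R).

Definition case_ok (c : ctrl_case) : Prop :=
  match c with
  | CaseP1 => True
  | CaseP2 a => 0 <= a
  | CaseP3 a b => 0 <= a /\ 0 <= b
  end.

Definition U_of (c : ctrl_case) (u : R) : Prop :=
  match c with
  | CaseP1 => True
  | CaseP2 a => - a <= u
  | CaseP3 a b => - a <= u /\ u <= b
  end.

Definition Lg {n} (g : Rn n -> Rn n) (DF : Rn n -> Rn n) (x : Rn n) : R :=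
  dot (DF x) (g x).
Definition MLf {l n} (D : Rn l -> Prop) (f : Rn l -> Rn n -> Rn n)
    (DF : Rn n -> Rn n) (x : Rn n) : R :=
  maxD D (fun d => dot (DF x) (f d x)).

(* chain gam i0 [i1;...;ir] s = gam i1 i2 (gam i2 i3 (... gam ir i0 s)) *)
Fixpoint chain {k} (gam : Fin.t k -> Fin.t k -> R -> R) (i0 : Fin.t k)
    (l : list (Fin.t k)) (s : R) : R :=
  match l with
  | nil => s
  | i :: nil => gam i i0 s
  | i :: ((j :: _) as t) => gam i j (chain gam i0 t s)
  end.
Definition cycle_comp {k} (gam : Fin.t k -> Fin.t k -> R -> R)
    (l : list (Fin.t k)) (s : R) : R :=
  match l with
  | nil => s
  | i1 :: _ => chain gam i1 l s
  end.
Definition small_gain {k} (gam : Fin.t k -> Fin.t k -> R -> R) : Prop :=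
  forall l : list (Fin.t k), NoDup l -> (2 <= length l)%nat ->
    forall s, 0 < s -> cycle_comp gam l s < s.

Section VRCLF.
Context {l n k : nat} (D : Rn l -> Prop) (f : Rn l -> Rn n -> Rn n)
  (g : Rn n -> Rn n) (c : ctrl_case)
  (V : Fin.t k -> Rn n -> R) (DV : Fin.t k -> Rn n -> Rn n)
  (eta : Rn n -> R) (Deta : Rn n -> Rn n)
  (W : Rn n -> R) (DW : Rn n -> Rn n)
  (delta K : R -> R) (gam : Fin.t k -> Fin.t k -> R -> R) (rho : R -> R)
  (eps : R) (A : Rn n -> Prop) (kappa : Rn n -> R) (nu : option nat).

Definition active (i : Fin.t k) (x : Rn n) : Prop :=
  fmax k (fun s => gam i s (V s x)) <= V i x.

Definition VRCLF_data_ok : Prop :=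
  (forall i, C1 (V i) (DV i)) /\ (forall i x, 0 <= V i x) /\
  C1 eta Deta /\ eta vzero < 0 /\
  C1 W DW /\ (forall x, 1 <= W x) /\
  (forall M, 0 < M -> compact_set (fun x => W x <= M)) /\
  cont_Rplus delta /\ (forall s, 0 <= s -> 0 < delta s) /\
  cont_Rplus K /\ (forall s t, 0 <= s -> s <= t -> K s <= K t) /\
  (forall s, 0 <= s -> 1 <= K s) /\
  (forall i j, class_N1 (gam i j)) /\ (forall i s, 0 <= s -> gam i i s = 0) /\
  cont_Rplus rho /\ (forall s, 0 <= s -> 0 <= rho s) /\ posdef_fun rho /\
  0 < eps.

Definition prop_i : Prop :=
  exists a1 a2, class_Kinf a1 /\ class_Kinf a2 /\
    forall x, a1 (norm x) <= fmax k (fun i => V i x) /\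
              fmax k (fun i => V i x) <= a2 (norm x).

Definition prop_ii : Prop :=
  forall x, eta x <= eps -> forall i j,
    (active i x -> Lg g (DV i) x = 0 ->
       MLf D f (DV i) x + rho (V i x) <= 0) /\
    (active i x -> active j x -> Lg g (DV i) x * Lg g (DV j) x < 0 ->
       MLf D f (DV i) x + rho (V i x) <=
       Lg g (DV i) x / Lg g (DV j) x * (MLf D f (DV j) x + rho (V j x))).

Definition prop_iii : Prop :=
  forall x, 0 <= eta x ->
    (Lg g Deta x = 0 -> MLf D f Deta x + delta (eta x) <= 0) /\
    (Lg g DW x = 0 -> MLf D f DW x - K (eta x) * W x <= 0) /\
    (Lg g Deta x * Lg g DW x < 0 ->
       MLf D f Deta x + delta (eta x) <=
       Lg g Deta x / Lg g DW x * (MLf D f DW x - K (eta x) * W x)).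

Definition prop_iv : Prop :=
  forall x, 0 <= eta x -> eta x <= eps -> forall j,
    (active j x -> Lg g Deta x * Lg g (DV j) x < 0 ->
       MLf D f Deta x + delta (eta x) <=
       Lg g Deta x / Lg g (DV j) x * (MLf D f (DV j) x + rho (V j x))) /\
    (active j x -> Lg g DW x * Lg g (DV j) x < 0 ->
       MLf D f DW x - K (eta x) * W x <=
       Lg g DW x / Lg g (DV j) x * (MLf D f (DV j) x + rho (V j x))).

Definition prop_v : Prop := small_gain gam.

Definition prop_vi : Prop :=
  open_set A /\ A vzero /\ loc_lipschitz_on A kappa /\ Cnu_on nu A kappa /\
  (forall x, A x -> U_of c (kappa x)) /\ kappa vzero = 0 /\
  forall i x, A x -> active i x ->
    MLf D f (DV i) x + Lg g (DV i) x * kappa x <= - rho (V i x).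

Definition prop_vii (a : R) : Prop :=
  (forall x i, active i x -> eta x <= eps -> 0 < Lg g (DV i) x ->
     MLf D f (DV i) x + rho (V i x) - a * Lg g (DV i) x < 0) /\
  (forall x, 0 <= eta x -> 0 < Lg g Deta x ->
     MLf D f Deta x + delta (eta x) - a * Lg g Deta x < 0) /\
  (forall x, 0 <= eta x -> 0 < Lg g DW x ->
     MLf D f DW x - K (eta x) * W x - a * Lg g DW x < 0).

Definition prop_viii (b : R) : Prop :=
  (forall x i, active i x -> eta x <= eps -> Lg g (DV i) x < 0 ->
     MLf D f (DV i) x + rho (V i x) + b * Lg g (DV i) x < 0) /\
  (forall x, 0 <= eta x -> Lg g Deta x < 0 ->
     MLf D f Deta x + delta (eta x) + b * Lg g Deta x < 0) /\
  (forall x, 0 <= eta x -> Lg g DW x < 0 ->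
     MLf D f DW x - K (eta x) * W x + b * Lg g DW x < 0).

Definition VRCLF : Prop :=
  VRCLF_data_ok /\ prop_i /\ prop_ii /\ prop_iii /\ prop_iv /\ prop_v /\
  prop_vi /\
  match c with
  | CaseP1 => True
  | CaseP2 a => prop_vii a
  | CaseP3 a b => prop_vii a /\ prop_viii b
  end.
End VRCLF.

(* Main.v *)
Require Import Defs.
From Stdlib Require Import Reals List Lra Lia Ranalysis5 ClassicalEpsilon.
From Stdlib Require Vectors.Fin FinFun.
Open Scope R_scope.

Ltac rm_tac := unfold Rmax, Rabs in *; repeat (destruct Rle_dec || destruct Rcase_abs); lra.

Definition ctsR (h : R -> R) : Prop :=
  forall s e, 0 < e -> exists dl, 0 < dl /\
    forall t, Rabs (t - s) < dl -> Rabs (h t - h s) < e.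

Lemma ctsR_cpt h : ctsR h -> forall x, continuity_pt h x.
Proof.
  intros Hc x eps He. destruct (Hc x eps He) as [dl [Hdl H]].
  exists dl; split; [lra|]. intros y [_ Hy]. simpl in *. unfold R_dist in *. apply H; exact Hy.
Qed.

Lemma ctsR_comp h1 h2 : ctsR h1 -> ctsR h2 -> ctsR (fun t => h1 (h2 t)).
Proof.
  intros H1 H2 s e He. destruct (H1 (h2 s) e He) as [d1 [Hd1 K1]].
  destruct (H2 s d1 Hd1) as [d2 [Hd2 K2]]. exists d2; split; auto.
Qed.

Lemma ctsR_plus h1 h2 : ctsR h1 -> ctsR h2 -> ctsR (fun t => h1 t + h2 t).
Proof.
  intros H1 H2 s e He. destruct (H1 s (e/2)) as [d1 [Hd1 K1]]; [lra|].
  destruct (H2 s (e/2)) as [d2 [Hd2 K2]]; [lra|].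
  exists (Rmin d1 d2); split; [apply Rmin_pos; auto|].
  intros t Ht. assert (A1 := K1 t ltac:(eapply Rlt_le_trans; [exact Ht| apply Rmin_l])).
  assert (A2 := K2 t ltac:(eapply Rlt_le_trans; [exact Ht| apply Rmin_r])).
  revert A1 A2. unfold Rabs; repeat destruct Rcase_abs; lra.
Qed.

Lemma ctsR_const c : ctsR (fun _ => c).
Proof. intros s e He. exists 1; split; [lra|]. intros. unfold Rminus; rewrite Rplus_opp_r, Rabs_R0; lra. Qed.

Lemma ctsR_clamp : ctsR (fun t => Rmax 0 t).
Proof.
  intros s e He. exists e; split; auto. intros t Ht. revert Ht. rm_tac.
Qed.

Lemma ctsR_scale2 : ctsR (fun t => 2 * t).
Proof.
  intros s e He. exists (e/2); split; [lra|]. intros t Ht. revert Ht. rm_tac.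
Qed.

Lemma ctsR_fsum n (F : Fin.t n -> R -> R) :
  (forall i, ctsR (F i)) -> ctsR (fun t => fsum n (fun i => F i t)).
Proof.
  revert F; induction n; intros F HF; simpl.
  - apply ctsR_const.
  - apply ctsR_plus; auto.
Qed.

Lemma ctsR_of_Rplus h : cont_Rplus h -> ctsR (fun t => h (Rmax 0 t)).
Proof.
  intros Hc s e He. destruct (Hc (Rmax 0 s) ltac:(apply Rmax_l) e He) as [dl [Hdl K]].
  exists dl; split; auto. intros t Ht. apply K; [apply Rmax_l|]. revert Ht; rm_tac.
Qed.

Lemma fsum_zero n (v : Fin.t n -> R) : (forall i, v i = 0) -> fsum n v = 0.
Proof. revert v; induction n; intros v Hv; simpl; auto. rewrite Hv, IHn; auto; lra. Qed.

Lemma fsum_le n (v w : Fin.t n -> R) : (forall i, v i <= w i) -> fsum n v <= fsum n w.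
Proof. revert v w; induction n; intros v w Hv; simpl; [lra|].
  specialize (IHn (fun i => v (Fin.FS i)) (fun i => w (Fin.FS i)) (fun i => Hv _)). specialize (Hv Fin.F1). lra. Qed.

Lemma fsum_nonneg n (v : Fin.t n -> R) : (forall i, 0 <= v i) -> 0 <= fsum n v.
Proof. intros H. rewrite <- (fsum_zero n (fun _ => 0)) by auto. apply fsum_le; auto. Qed.

Lemma fsum_ge_term n (v : Fin.t n -> R) : (forall i, 0 <= v i) -> forall i0, v i0 <= fsum n v.
Proof.
  revert v; induction n; intros v Hv i0.
  - apply (Fin.case0 (fun _ => _) i0).
  - simpl. apply (Fin.caseS' i0).
    + assert (0 <= fsum n (fun i => v (Fin.FS i))) by (apply fsum_nonneg; auto). lra.
    + intros p. specialize (IHn (fun i => v (Fin.FS i)) (fun i => Hv _) p). specialize (Hv Fin.F1). simpl in IHn. lra.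
Qed.

Lemma fmax_le n (v w : Fin.t n -> R) : (forall i, v i <= w i) -> fmax n v <= fmax n w.
Proof. revert v w; induction n; intros v w Hv; simpl; [lra|].
  specialize (IHn (fun i => v (Fin.FS i)) (fun i => w (Fin.FS i)) (fun i => Hv _)). specialize (Hv Fin.F1).
  revert IHn Hv. rm_tac. Qed.

Lemma nodup_len k (l : list (Fin.t k)) : NoDup l -> (length l <= k)%nat.
Proof.
  intros Hn.
  assert (Hm : NoDup (map (fun i => proj1_sig (Fin.to_nat i)) l)).
  { apply FinFun.Injective_map_NoDup; auto. intros a b Hab. apply Fin.to_nat_inj; auto. }
  apply NoDup_incl_length with (l' := seq 0 k) in Hm.
  - rewrite length_map, length_seq in Hm; auto.
  - intros x Hx. apply in_map_iff in Hx. destruct Hx as [i [<- _]].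
    apply in_seq. destruct (Fin.to_nat i); simpl; lia.
Qed.
Definition HP (H : R -> R) : Prop :=
  ctsR H /\ H 0 = 0 /\ (forall t, 0 <= t -> t <= H t) /\
  (forall s t, 0 <= s -> s < t -> H s < H t).

Definition Hn (H : R -> R) (m : nat) (x : R) : R := Nat.iter m H x.

Lemma Hn_S H m x : Hn H (S m) x = H (Hn H m x).
Proof. reflexivity. Qed.

Lemma Hn_0 H m : HP H -> Hn H m 0 = 0.
Proof. intros (_&H0&_). induction m; simpl; auto. unfold Hn in *; simpl; rewrite IHm; auto. Qed.

Lemma Hn_ge H m t : HP H -> 0 <= t -> t <= Hn H m t.
Proof. intros HH Ht. destruct HH as (_&_&Hg&_). induction m; [simpl; lra|].
  rewrite Hn_S. specialize (Hg (Hn H m t) ltac:(lra)). lra. Qed.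

Lemma Hn_strict H m s t : HP H -> 0 <= s -> s < t -> Hn H m s < Hn H m t.
Proof. intros HH Hs Hst. induction m; [simpl; auto|].
  rewrite !Hn_S. assert (HH' := HH). destruct HH' as (_&_&_&Hst'). apply Hst'; auto.
  apply Rle_trans with s; auto. apply Hn_ge; auto. Qed.

Lemma Hn_mono H m s t : HP H -> 0 <= s -> s <= t -> Hn H m s <= Hn H m t.
Proof. intros HH Hs Hst. destruct (Rle_lt_or_eq_dec _ _ Hst) as [h|h].
  - left; apply Hn_strict; auto.
  - subst; lra. Qed.

Lemma Hn_nonneg H m t : HP H -> 0 <= t -> 0 <= Hn H m t.
Proof. intros. apply Rle_trans with t; auto. apply Hn_ge; auto. Qed.

Lemma Hn_add H a b x : Hn H (a + b) x = Hn H a (Hn H b x).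
Proof. induction a; [reflexivity|]. change (Hn H (S (a+b)) x = Hn H (S a) (Hn H b x)). rewrite !Hn_S, IHa; reflexivity. Qed.

Lemma Hn_le_m H m m' t : HP H -> 0 <= t -> (m <= m')%nat -> Hn H m t <= Hn H m' t.
Proof. intros HH Ht Hm. replace m' with ((m' - m) + m)%nat by lia. rewrite Hn_add.
  apply Hn_ge; auto. apply Hn_nonneg; auto. Qed.

Lemma Hn_cts H m : HP H -> ctsR (Hn H m).
Proof. intros HH. induction m.
  - intros s e He. exists e; split; auto.
  - intros s e He. destruct HH as (Hc&_). destruct (Hc (Hn H m s) e He) as [d1 [Hd1 K1]].
    destruct (IHm s d1 Hd1) as [d2 [Hd2 K2]]. exists d2; split; auto.
    intros t Ht. rewrite !Hn_S. apply K1, K2; auto. Qed.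

Definition Tf H N (u : R) := Hn H N (2 * u).

Lemma T_strict H N s t : HP H -> 0 <= s -> s < t -> Tf H N s < Tf H N t.
Proof. intros. unfold Tf. apply Hn_strict; auto; lra. Qed.
Lemma T_mono H N s t : HP H -> 0 <= s -> s <= t -> Tf H N s <= Tf H N t.
Proof. intros. unfold Tf. apply Hn_mono; auto; lra. Qed.
Lemma T_0 H N : HP H -> Tf H N 0 = 0.
Proof. intros. unfold Tf. rewrite Rmult_0_r. apply Hn_0; auto. Qed.
Lemma T_ge H N u : HP H -> 0 <= u -> 2 * u <= Tf H N u.
Proof. intros. unfold Tf. apply Hn_ge; auto; lra. Qed.

Lemma phi_exists H N : HP H ->
  exists phi : R -> R, forall t, 0 <= phi t /\ Tf H N (phi t) = Rmax 0 t.
Proof.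
  intros HH.
  assert (Hex : forall t, exists u, 0 <= u /\ Tf H N u = Rmax 0 t).
  { intros t. set (t' := Rmax 0 t). assert (Ht' : 0 <= t') by apply Rmax_l.
    destruct (Rle_lt_or_eq_dec _ _ Ht') as [Hp|Hz].
    - assert (Hc : forall a, 0 <= a <= t' -> continuity_pt (fun u => Tf H N u - t') a).
      { intros a _. apply ctsR_cpt. apply ctsR_plus; [|apply ctsR_const].
        unfold Tf. apply (ctsR_comp (Hn H N) (fun t => 2 * t)); [apply Hn_cts; auto|apply ctsR_scale2]. }
      destruct (IVT_interv _ 0 t' Hc Hp) as [z [Hz1 Hz2]].
      + rewrite T_0; auto; lra.
      + assert (T_ge' := T_ge H N t' HH Ht'). lra.
      + exists z; split; [lra|]. lra.
    - exists 0; split; [lra|]. rewrite T_0; auto. }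
  exists (fun t => proj1_sig (constructive_indefinite_description _ (Hex t))).
  intros t. destruct (constructive_indefinite_description _ (Hex t)); simpl; auto.
Qed.

Definition phi_spec H N (phi : R -> R) := forall t, 0 <= phi t /\ Tf H N (phi t) = Rmax 0 t.

Lemma phi_eq H N phi t : phi_spec H N phi -> 0 <= t -> Tf H N (phi t) = t.
Proof. intros Hs Ht. destruct (Hs t) as [_ E]. rewrite E. unfold Rmax; destruct Rle_dec; lra. Qed.

Lemma phi_0 H N phi : HP H -> phi_spec H N phi -> phi 0 = 0.
Proof. intros HH Hs. destruct (Hs 0) as [Hn E].
  destruct (Rle_lt_or_eq_dec _ _ Hn) as [Hp|Hz]; auto.
  assert (T_strict' := T_strict H N 0 (phi 0) HH ltac:(lra) Hp). rewrite T_0 in T_strict'; auto.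
  rewrite E in T_strict'. revert T_strict'; rm_tac. Qed.

Lemma phi_mono H N phi s t : HP H -> phi_spec H N phi -> 0 <= s -> s <= t -> phi s <= phi t.
Proof. intros HH Hs H0 Hst. destruct (Rle_or_lt (phi s) (phi t)) as [h|h]; auto.
  assert (X := T_strict H N _ _ HH (proj1 (Hs t)) h). rewrite !phi_eq with (phi:=phi) in X by (auto; lra). lra. Qed.

Lemma phi_strict H N phi s t : HP H -> phi_spec H N phi -> 0 <= s -> s < t -> phi s < phi t.
Proof. intros HH Hs H0 Hst. destruct (Rle_or_lt (phi t) (phi s)) as [h|h]; auto.
  assert (X := T_mono H N (phi t) (phi s) HH (proj1 (Hs t)) h). rewrite !phi_eq with (phi:=phi) in X by (auto; lra). lra. Qed.

Lemma phi_le_id H N phi t : HP H -> phi_spec H N phi -> 0 <= t -> phi t <= t.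
Proof. intros HH Hs Ht. assert (X := T_ge H N (phi t) HH (proj1 (Hs t))).
  rewrite phi_eq with (phi:=phi) in X by auto. pose proof (proj1 (Hs t)). lra. Qed.

Lemma phi_pos H N phi t : HP H -> phi_spec H N phi -> 0 < t -> 0 < phi t.
Proof. intros HH Hs Ht. rewrite <- (phi_0 H N phi HH Hs). apply (phi_strict H N); auto; lra. Qed.

Lemma phi_infty H N phi : HP H -> phi_spec H N phi -> tends_infty phi.
Proof. intros HH Hs M. exists (Tf H N (Rmax 0 M)). intros s Hs0.
  assert (0 <= Tf H N (Rmax 0 M)) by (apply Rle_trans with (2 * Rmax 0 M); [pose proof (Rmax_l 0 M); lra | apply T_ge; auto; apply Rmax_l]).
  destruct (Rle_or_lt (Rmax 0 M) (phi s)) as [h|h].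
  - apply Rle_trans with (Rmax 0 M); auto. apply Rmax_r.
  - exfalso. assert (X := T_strict H N _ _ HH (proj1 (Hs s)) h).
    rewrite phi_eq with (phi:=phi) in X by (auto; lra). lra. Qed.

Lemma phi_cont H N phi : HP H -> phi_spec H N phi -> cont_Rplus phi.
Proof.
  intros HH Hs s Hs0 e He. set (u := phi s). assert (Hu : 0 <= u) by apply (Hs s).
  assert (Es : Tf H N u = s) by (apply phi_eq; auto).
  set (d1 := Tf H N (u + e/2) - s).
  assert (Hd1 : 0 < d1) by (unfold d1; rewrite <- Es; assert (X:= T_strict H N u (u+e/2) HH Hu ltac:(lra)); lra).
  destruct (Rle_or_lt u (e/2)) as [Hue|Hue].
  - exists d1; split; auto. intros t Ht0 Ht.
    assert (phi t < u + e/2).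
    { destruct (Rle_or_lt (u+e/2) (phi t)) as [h|h]; auto.
      assert (X := T_mono H N (u+e/2) (phi t) HH ltac:(lra) h). rewrite phi_eq with (phi:=phi) in X by auto.
      unfold d1 in *. revert Ht; rm_tac. }
    pose proof (proj1 (Hs t)). fold u. rm_tac.
  - set (d2 := s - Tf H N (u - e/2)).
    assert (Hd2 : 0 < d2) by (unfold d2; rewrite <- Es; assert (X:= T_strict H N (u-e/2) u HH ltac:(lra) ltac:(lra)); lra).
    exists (Rmin d1 d2); split; [apply Rmin_pos; auto|]. intros t Ht0 Ht.
    assert (Ht1 : Rabs (t - s) < d1) by (eapply Rlt_le_trans; [exact Ht| apply Rmin_l]).
    assert (Ht2 : Rabs (t - s) < d2) by (eapply Rlt_le_trans; [exact Ht| apply Rmin_r]).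
    assert (phi t < u + e/2).
    { destruct (Rle_or_lt (u+e/2) (phi t)) as [h|h]; auto.
      assert (X := T_mono H N (u+e/2) (phi t) HH ltac:(lra) h). rewrite phi_eq with (phi:=phi) in X by auto.
      unfold d1 in *. revert Ht1; rm_tac. }
    assert (u - e/2 < phi t).
    { destruct (Rle_or_lt (phi t) (u - e/2)) as [h|h]; auto.
      assert (X := T_mono H N (phi t) (u - e/2) HH (proj1 (Hs t)) h). rewrite phi_eq with (phi:=phi) in X by auto.
      unfold d2 in *. revert Ht2; rm_tac. }
    fold u. rm_tac.
Qed.
Lemma chain_cons {k} (gam : Fin.t k -> Fin.t k -> R -> R) i0 i t s :
  chain gam i0 (i :: t) s = gam i (hd i0 t) (chain gam i0 t s).
Proof. destruct t; reflexivity. Qed.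

Lemma H_mono H s t : HP H -> 0 <= s -> s <= t -> H s <= H t.
Proof. intros. apply (Hn_mono H 1); auto. Qed.
Lemma H_ge H t : HP H -> 0 <= t -> t <= H t.
Proof. intros. apply (Hn_ge H 1); auto. Qed.

Lemma mono_max (h : R -> R) a b : (forall s t, 0 <= s -> s <= t -> h s <= h t) ->
  0 <= a -> 0 <= b -> h (Rmax a b) <= Rmax (h a) (h b).
Proof. intros Hm Ha Hb. unfold Rmax at 1. destruct Rle_dec.
  - apply Rle_trans with (h b); [lra|apply Rmax_r].
  - apply Rmax_l. Qed.

Lemma chain_bound {k} (F G : Fin.t k -> Fin.t k -> R -> R) (H phi : R -> R) i0 :
  HP H ->
  (forall i j s, 0 <= s -> 0 <= F i j s <= H s) ->
  (forall i j s t, 0 <= s -> s <= t -> F i j s <= F i j t) ->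
  (forall i j s, 0 <= s -> 0 <= G i j s <= Rmax (F i j s) (phi s)) ->
  (forall s, 0 <= s -> 0 <= phi s <= s) ->
  (forall s t, 0 <= s -> s <= t -> phi s <= phi t) ->
  forall l s, 0 <= s ->
    (0 <= chain F i0 l s <= Hn H (length l) s) /\
    (0 <= chain G i0 l s <= Rmax (chain F i0 l s) (Hn H (length l) (phi (Hn H (length l) s)))).
Proof.
  intros HH hF hFm hG hph hphm l s Hs. induction l as [|i t IH].
  - simpl. split; [lra|]. split; [lra| apply Rmax_l].
  - rewrite !chain_cons. simpl length.
    set (m := length t) in *. set (cf := chain F i0 t s) in *. set (cg := chain G i0 t s) in *.
    set (j := hd i0 t). destruct IH as [[Hcf1 Hcf2] [Hcg1 Hcg2]].
    set (B := Hn H m (phi (Hn H m s))) in *.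
    set (B' := Hn H (S m) (phi (Hn H (S m) s))).
    assert (Hms : 0 <= Hn H m s) by (apply Hn_nonneg; auto).
    assert (HmS : Hn H m s <= Hn H (S m) s) by (rewrite Hn_S; apply H_ge; auto).
    assert (Hp1 : 0 <= phi (Hn H m s)) by (apply hph; auto).
    assert (HB0 : 0 <= B) by (apply Hn_nonneg; auto).
    assert (Hp2 : phi (Hn H m s) <= phi (Hn H (S m) s)) by (apply hphm; auto).
    assert (Hp3 : 0 <= phi (Hn H (S m) s)) by (apply hph; lra).
    split.
    + split; [apply hF; auto|]. apply Rle_trans with (H cf); [apply hF; auto|].
      rewrite Hn_S. apply H_mono; auto.
    + split; [apply hG; auto|].
      assert (E1 : H B <= B').
      { unfold B, B'. rewrite <- Hn_S. apply Hn_mono; auto. }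
      assert (E2 : phi cf <= B').
      { apply Rle_trans with (phi (Hn H (S m) s)). apply hphm; auto; lra. apply Hn_ge; auto. }
      assert (E3 : phi B <= B').
      { apply Rle_trans with B. apply hph; auto. unfold B, B'.
        apply Rle_trans with (Hn H m (phi (Hn H (S m) s))). apply Hn_mono; auto.
        apply Hn_le_m; auto. }
      assert (M0 : cg <= Rmax cf B) by exact Hcg2.
      assert (F1 : F i j cg <= Rmax (F i j cf) (F i j B)).
      { apply Rle_trans with (F i j (Rmax cf B)). apply hFm; auto.
        apply mono_max; auto. }
      assert (F2 : F i j B <= H B) by (apply hF; auto).
      assert (P1 : phi cg <= Rmax (phi cf) (phi B)).
      { apply Rle_trans with (phi (Rmax cf B)). apply hphm; auto. apply mono_max; auto. }
      assert (G1 := proj2 (hG i j cg Hcg1)).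
      revert G1 F1 F2 P1 E1 E2 E3. unfold Rmax. repeat destruct Rle_dec; lra.
Qed.

Lemma small_gain_new {k} (F G : Fin.t k -> Fin.t k -> R -> R) (H phi : R -> R) :
  HP H -> phi_spec H (k + k) phi ->
  (forall i j s, 0 <= s -> 0 <= F i j s <= H s) ->
  (forall i j s t, 0 <= s -> s <= t -> F i j s <= F i j t) ->
  (forall i j s, 0 <= s -> 0 <= G i j s <= Rmax (F i j s) (phi s)) ->
  small_gain F -> small_gain G.
Proof.
  intros HH Hs hF hFm hG SG l Hnd Hlen s Hs0.
  assert (hph : forall s, 0 <= s -> 0 <= phi s <= s).
  { intros x Hx. split; [apply (Hs x)| apply (phi_le_id H (k+k)); auto]. }
  assert (hphm : forall s t, 0 <= s -> s <= t -> phi s <= phi t).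
  { intros; apply (phi_mono H (k+k)); auto. }
  specialize (SG l Hnd Hlen s Hs0).
  destruct l as [|i1 t]; [simpl in Hlen; lia|]. unfold cycle_comp in *.
  destruct (chain_bound F G H phi i1 HH hF hFm hG hph hphm (i1 :: t) s ltac:(lra)) as [_ [_ Hb]].
  set (m := length (i1 :: t)) in *.
  assert (Hm : (m <= k)%nat) by (apply nodup_len; auto).
  assert (Hks : s <= Hn H k s) by (apply Hn_ge; auto; lra).
  assert (Hk0 : 0 <= Hn H k s) by lra.
  set (v := phi (Hn H k s)).
  assert (Hv0 : 0 <= v) by apply (Hs _).
  assert (Bm : Hn H m (phi (Hn H m s)) <= Hn H k v).
  { apply Rle_trans with (Hn H m v). apply Hn_mono; auto. apply hph; apply Hn_nonneg; auto; lra.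
    apply hphm; [apply Hn_nonneg; auto; lra| apply Hn_le_m; auto; lra].
    apply Hn_le_m; auto. }
  assert (Bk : Hn H k v < s).
  { destruct (Rle_or_lt s (Hn H k v)) as [h|h]; auto. exfalso.
    assert (Tv : Tf H (k+k) v = Hn H k s) by (apply phi_eq; auto).
    assert (vpos : 0 < v) by (apply (phi_pos H (k+k)); auto; lra).
    unfold Tf in Tv. rewrite Hn_add in Tv.
    assert (X1 : Hn H k v < Hn H k (2 * v)) by (apply Hn_strict; auto; lra).
    assert (X2 : Hn H k (Hn H k v) < Hn H k (Hn H k (2 * v))) by (apply Hn_strict; auto; apply Hn_nonneg; auto).
    assert (X3 : Hn H k s <= Hn H k (Hn H k v)) by (apply Hn_mono; auto; lra).
    lra. }
  revert Hb SG Bm Bk. unfold Rmax; destruct Rle_dec; lra.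
Qed.
Definition Hdef {k} (gam : Fin.t k -> Fin.t k -> R -> R) (t : R) : R :=
  Rmax 0 t + fsum k (fun i => fsum k (fun j => gam i j (Rmax 0 t))).

Lemma Hdef_HP {k} (gam : Fin.t k -> Fin.t k -> R -> R) :
  (forall i j, class_N1 (gam i j)) -> HP (Hdef gam).
Proof.
  intros HN. unfold Hdef. split; [|split; [|split]].
  - apply ctsR_plus; [apply ctsR_clamp|].
    apply (ctsR_fsum k (fun i t => fsum k (fun j => gam i j (Rmax 0 t)))). intro i.
    apply (ctsR_fsum k (fun j t => gam i j (Rmax 0 t))). intro j.
    apply ctsR_of_Rplus. apply (HN i j).
  - replace (Rmax 0 0) with 0 by (unfold Rmax; destruct Rle_dec; lra).
    rewrite fsum_zero; [lra|]. intro i. apply fsum_zero. intro j. apply (HN i j).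
  - intros t Ht. replace (Rmax 0 t) with t by (unfold Rmax; destruct Rle_dec; lra).
    assert (0 <= fsum k (fun i => fsum k (fun j => gam i j t))); [|lra].
    apply fsum_nonneg; intro i; apply fsum_nonneg; intro j. apply (HN i j); auto.
  - intros s t Hs Hst. replace (Rmax 0 t) with t by (unfold Rmax; destruct Rle_dec; lra).
    replace (Rmax 0 s) with s by (unfold Rmax; destruct Rle_dec; lra).
    assert (fsum k (fun i => fsum k (fun j => gam i j s)) <= fsum k (fun i => fsum k (fun j => gam i j t))); [|lra].
    apply fsum_le; intro i; apply fsum_le; intro j. apply (HN i j); lra.
Qed.

Lemma Hdef_ge {k} (gam : Fin.t k -> Fin.t k -> R -> R) :
  (forall i j, class_N1 (gam i j)) -> forall i j s, 0 <= s -> 0 <= gam i j s <= Hdef gam s.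
Proof.
  intros HN i j s Hs. split; [apply (HN i j); auto|]. unfold Hdef.
  replace (Rmax 0 s) with s by (unfold Rmax; destruct Rle_dec; lra).
  assert (gam i j s <= fsum k (fun i => fsum k (fun j => gam i j s))); [|lra].
  apply Rle_trans with (fsum k (fun j => gam i j s)).
  - apply (fsum_ge_term k (fun j => gam i j s)). intro; apply (HN i _); auto.
  - apply (fsum_ge_term k (fun i => fsum k (fun j => gam i j s))). intro.
    apply fsum_nonneg; intro; apply (HN _ _); auto.
Qed.

Theorem lemma3p6 (l n k : nat) (D : Rn l -> Prop) (f : Rn l -> Rn n -> Rn n)
  (g : Rn n -> Rn n) (c : ctrl_case)
  (V : Fin.t k -> Rn n -> R) (DV : Fin.t k -> Rn n -> Rn n)
  (eta : Rn n -> R) (Deta : Rn n -> Rn n)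
  (W : Rn n -> R) (DW : Rn n -> Rn n)
  (delta K : R -> R) (gam : Fin.t k -> Fin.t k -> R -> R) (rho : R -> R)
  (eps : R) (A : Rn n -> Prop) (kappa : Rn n -> R) (nu : option nat) :
  compact_set D -> (exists d, D d) ->
  f_cont D f -> vcont g -> (forall d, D d -> f d vzero = vzero) ->
  hypH D f g -> case_ok c ->
  VRCLF D f g c V DV eta Deta W DW delta K gam rho eps A kappa nu ->
  exists gam' : Fin.t k -> Fin.t k -> R -> R,
    (forall i j, class_N1 (gam' i j)) /\
    (forall i s, 0 <= s -> gam' i i s = 0) /\
    (forall i j, i <> j -> posdef_fun (gam' i j) /\ tends_infty (gam' i j)) /\
    VRCLF D f g c V DV eta Deta W DW delta K gam' rho eps A kappa nu.
Proof.
  intros _ _ _ _ _ _ _ HV.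
  destruct HV as [Hdata [Hi [Hii [Hiii [Hiv [Hv [Hvi Hcase]]]]]]].
  assert (Hdata' := Hdata).
  destruct Hdata' as (_&HV0&_&_&_&_&_&_&_&_&_&_&HN&Hdiag&_).
  set (H := Hdef gam).
  assert (HH : HP H) by (apply Hdef_HP; auto).
  destruct (phi_exists H (k + k) HH) as [phi Hphi].
  assert (Hps : phi_spec H (k+k) phi) by exact Hphi.
  set (gam' := fun i j s => if Fin.eq_dec i j then gam i j s else Rmax (gam i j s) (phi s)).
  assert (Hge : forall i j s, 0 <= s -> gam i j s <= gam' i j s).
  { intros i j s _. unfold gam'. destruct Fin.eq_dec; [lra| apply Rmax_l]. }
  assert (Hact : forall i x, active V gam' i x -> active V gam i x).
  { unfold active. intros i x Ha. eapply Rle_trans; [|exact Ha]. apply fmax_le. intro; apply Hge; auto. }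
  assert (HN' : forall i j, class_N1 (gam' i j)).
  { intros i j. unfold gam'. destruct Fin.eq_dec; auto.
    destruct (HN i j) as (A1&A2&A3&A4). split; [|split; [|split]].
    - intros s Hs. apply Rle_trans with (gam i j s); auto. apply Rmax_l.
    - intros s Hs e He. destruct (A2 s Hs e He) as [d1 [Hd1 K1]].
      destruct (phi_cont H (k+k) phi HH Hps s Hs e He) as [d2 [Hd2 K2]].
      exists (Rmin d1 d2); split; [apply Rmin_pos; auto|]. intros t Ht0 Ht.
      assert (X1 := K1 t Ht0 ltac:(eapply Rlt_le_trans; [exact Ht| apply Rmin_l])).
      assert (X2 := K2 t Ht0 ltac:(eapply Rlt_le_trans; [exact Ht| apply Rmin_r])).
      revert X1 X2. rm_tac.
    - intros s t Hs Hst. assert (X1 := A3 s t Hs Hst).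
      assert (X2 := phi_mono H (k+k) phi s t HH Hps Hs Hst). revert X1 X2. rm_tac.
    - rewrite A4, (phi_0 H (k+k) phi HH Hps). rm_tac. }
  assert (Hdiag' : forall i s, 0 <= s -> gam' i i s = 0).
  { intros i s Hs. unfold gam'. destruct Fin.eq_dec; [auto| congruence]. }
  exists gam'. split; [exact HN'|]. split; [exact Hdiag'|]. split.
  { intros i j Hij. unfold gam'. destruct Fin.eq_dec; [congruence|]. split.
    - split. rewrite (proj2 (proj2 (proj2 (HN i j)))), (phi_0 H (k+k) phi HH Hps). rm_tac.
      intros s Hs. apply Rlt_le_trans with (phi s); [apply (phi_pos H (k+k)); auto| apply Rmax_r].
    - intros M. destruct (phi_infty H (k+k) phi HH Hps M) as [s0 Hs0]. exists s0. intros s Hs.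
      apply Rle_trans with (phi s); auto. apply Rmax_r. }
  split; [|split; [exact Hi|split; [|split; [exact Hiii|split; [|split; [|split]]]]]].
  - clear -Hdata HN' Hdiag'. unfold VRCLF_data_ok in *. tauto.
  - intros x Hx i j. destruct (Hii x Hx i j) as [B1 B2]. split.
    + intros a; apply B1; auto.
    + intros a1 a2; apply B2; auto.
  - intros x Hx1 Hx2 j. destruct (Hiv x Hx1 Hx2 j) as [B1 B2]. split.
    + intros a; apply B1; auto.
    + intros a; apply B2; auto.
  - unfold prop_v in *. apply (small_gain_new gam gam' H phi HH Hps); auto.
    + intros; apply Hdef_ge; auto.
    + intros; apply (HN i j); auto.
    + intros i j s Hs. split; [apply (HN' i j); auto|]. unfold gam'. destruct Fin.eq_dec.
      * apply Rmax_l.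
      * lra.
  - destruct Hvi as (B1&B2&B3&B4&B5&B6&B7). repeat split; auto.
  - destruct c; auto.
    + destruct Hcase as (C1&C2&C3). split; [|split]; auto.
    + destruct Hcase as [(C1&C2&C3) (E1&E2&E3)]. split; (split; [|split]); auto.
Qed.
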